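(* Let $U$ and $V$ be finite-dimensional vector spaces over a field $\mathbb{K}$, and let $\mathcal{S}$ be a linear subspace of $\mathcal{L}(U,V)$ with $\operatorname{codim}_{\mathcal{L}(U,V)}\mathcal{S}\leq \dim V-2$. Then every range-compatible group homomorphism $F:(\mathcal{S},+)\to(V,+)$ is local, i.e. there exists $x\in U$ such that $F(s)=s(x)$ for all $s\in\mathcal{S}$.
   Context: $\mathcal{L}(U,V)$ is the space of linear maps from $U$ to $V$. For a subset $\mathcal{S}$ of $\mathcal{L}(U,V)$, a map $F:\mathcal{S}\to V$ is range-compatible when $F(s)\in\operatorname{im}s$ for all $s\in\mathcal{S}$; it is local when there exists $x\in U$ with $F(s)=s(x)$ for all $s\in\mathcal{S}$. *)

(* Defs.v *)
From HB Require Import structures.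
From mathcomp Require Export all_boot all_order all_algebra.
Set Implicit Arguments. Unset Strict Implicit. Unset Printing Implicit Defensive.
Export GRing.Theory.
Local Open Scope ring_scope.

Definition codimv (K : fieldType) (W : vectType K) (S : {vspace W}) : nat :=
  (\dim (fullv : {vspace W}) - \dim S)%N.

(* Main.v *)
Require Import Defs.
From HB Require Import structures.
From mathcomp Require Import all_boot all_order all_algebra.
From mathcomp Require Import zify.
Local Open Scope ring_scope.
Import GRing.Theory.
Set Implicit Arguments. Unset Strict Implicit. Unset Printing Implicit Defensive.

Section Basics.
Variable (K : fieldType).

Lemma exists_notin (V : vectType K) (L : {vspace V}) :
  (\dim L < \dim {:V})%N -> exists z, z \notin L.
Proof.
move=> hd; exists (vpick L^C).
have hC : (L^C != 0)%VS.
  by rewrite -dimv_eq0 dimv_compl; move: hd; case: (\dim {:V}) => // n; rewrite subn_eq0 -ltnNge.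
apply/negP => hz.
have : vpick L^C \in (L :&: L^C)%VS by rewrite memv_cap hz memv_pick.
by rewrite capv_compl memv0 vpick0 (negPf hC).
Qed.

Lemma line_indep (V : vectType K) (y z : V) a b d :
  y \notin <[z]>%VS -> z != 0 -> a *: y + b *: z = d *: (y + z) -> a = b.
Proof.
move=> hy hz e.
have e2 : (a - d) *: y = (d - b) *: z.
  by rewrite !scalerBl; apply/eqP; rewrite subr_eq addrAC eq_sym subr_eq addrC e scalerDr.
have had : a = d.
  apply/eqP; rewrite -subr_eq0; apply/negP => /negP nz.
  move: hy; rewrite (_ : y = ((a - d)^-1 * (d - b)) *: z) ?memvZ ?memv_line //.
  by rewrite -scalerA -e2 scalerA mulVf // scale1r.
move: e2; rewrite had subrr scale0r => /esym/eqP; rewrite scaler_eq0 (negPf hz) orbF subr_eq0.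
by move/eqP.
Qed.

Lemma scalar_const (V : vectType K) (f : V -> V) :
  (1 < \dim {:V})%N -> (forall y z, f (y + z) = f y + f z) ->
  (forall y, f y \in <[y]>%VS) -> exists c, forall y, f y = c *: y.
Proof.
move=> hd fadd fl.
have f0 : f 0 = 0.
  by have := fadd 0 0; rewrite addr0 -{1}[f 0]addr0 => /addrI/esym.
have key : forall y z a b, y \notin <[z]>%VS -> z != 0 -> f y = a *: y -> f z = b *: z -> a = b.
  move=> y z a b hy hz ey ez; have /vlineP[d ed] := fl (y + z).
  by apply: (line_indep (y := y) (z := z) (d := d)) => //; rewrite -ey -ez -fadd.
have [e he] : exists e : V, e \notin 0%VS by apply: exists_notin; rewrite dimv0 (ltn_trans _ hd).
have [e' he'] : exists e' : V, e' \notin <[e]>%VS by apply: exists_notin; rewrite dim_vline (leq_ltn_trans (leq_b1 _) hd).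
have enz : e != 0 by move: he; rewrite memv0.
have e'nz : e' != 0 by apply: contraNneq he' => ->; rewrite mem0v.
have /vlineP[c ec] := fl e; have /vlineP[c' ec'] := fl e'.
have cc' : c' = c by apply: key he' enz ec' ec.
exists c => y; have /vlineP[a ea] := fl y.
have [->|ynz] := eqVneq y 0; first by rewrite f0 scaler0.
case: (boolP (y \in <[e]>%VS)) => hy; last by rewrite ea (key _ _ _ _ hy enz ea ec).
have hy' : y \notin <[e']>%VS.
  apply/negP => /vlineP[k' ek']; move/vlineP: hy => [k ek].
  have k'nz : k' != 0 by apply: contraNneq ynz => k0; rewrite ek' k0 scale0r.
  move/negP: he'; apply; apply/vlineP; exists (k'^-1 * k).
  by rewrite -scalerA -ek ek' scalerA mulVf // scale1r.
by rewrite ea (key _ _ _ _ hy' e'nz ea ec') cc'.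
Qed.
End Basics.

Section Main.
Variables (K : fieldType) (U : vectType K).

Definition rkf (W V : vectType K) (g : 'Hom(U,W)) n (X : n.-tuple W) (i : 'I_n) (y : V) :=
  fun u : U => coord X i (g u) *: y.
Fact rkf_lin (W V : vectType K) (g : 'Hom(U,W)) n (X : n.-tuple W) (i : 'I_n) (y : V) :
  linear (rkf g X i y).
Proof. by move=> a u v; rewrite /rkf !linearP /= scalerDl scalerA. Qed.
HB.instance Definition _ (W V : vectType K) (g : 'Hom(U,W)) n (X : n.-tuple W) (i : 'I_n) (y : V) :=
  GRing.isSemilinear.Build K U V _ (rkf g X i y) (GRing.semilinear_linear (rkf_lin g X i y)).
Definition rk (W V : vectType K) (g : 'Hom(U,W)) n (X : n.-tuple W) (i : 'I_n) (y : V) : 'Hom(U,V) :=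
  linfun (rkf g X i y).
Lemma rkE (W V : vectType K) (g : 'Hom(U,W)) n (X : n.-tuple W) (i : 'I_n) (y : V) u :
  rk g X i y u = coord X i (g u) *: y.
Proof. by rewrite /rk lfunE. Qed.
Lemma rkD (W V : vectType K) (g : 'Hom(U,W)) n (X : n.-tuple W) (i : 'I_n) (y z : V) :
  rk g X i (y + z) = rk g X i y + rk g X i z.
Proof. by apply/lfunP => u; rewrite add_lfunE !rkE scalerDr. Qed.
Lemma rk_line (W V : vectType K) (g : 'Hom(U,W)) n (X : n.-tuple W) (i : 'I_n) (y : V) v :
  v \in limg (rk g X i y) -> v \in <[y]>%VS.
Proof. by case/memv_imgP => u _ ->; rewrite rkE memvZ ?memv_line. Qed.

Lemma base_full (V : vectType K) (F : 'Hom(U,V) -> V) :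
  (1 < \dim {:V})%N -> (forall s t, F (s + t) = F s + F t) ->
  (forall s, F s \in limg s) -> exists x, forall s, F s = s x.
Proof.
move=> hd Fadd Fl.
have F0 : F 0 = 0.
  by have := Fadd 0 0; rewrite addr0 -{1}[F 0]addr0 => /addrI/esym.
pose E := vbasis (fullv : {vspace U}).
have hc : forall i, exists c, forall y, F (rk \1%VF E i y) = c *: y.
  move=> i; apply: scalar_const => //.
    by move=> y z; rewrite rkD Fadd.
  by move=> y; apply: rk_line (Fl _).
have [c hcE] := fin_all_exists hc.
exists (\sum_i c i *: E`_i) => s.
have es : s = \sum_i rk \1%VF E i (s E`_i).
  apply/lfunP => u; rewrite sum_lfunE.
  under eq_bigr => i _ do rewrite rkE id_lfunE.
  by rewrite {1}(coord_vbasis (memvf u)) linear_sum; apply: eq_bigr => i _; rewrite linearZ.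
rewrite {1}es (big_morph F Fadd F0) linear_sum; apply: eq_bigr => i _.
by rewrite hcE linearZ.
Qed.

Section Quot.
Variables (V : vectType K) (y : V).
Definition qW := (<[y]>^C)%VS.
Definition qpi : 'Hom(V, subvs_of qW) := locked (linfun (vsproj qW) \o daddv_pi qW <[y]>)%VF.
Lemma qdisj : (qW :&: <[y]> = 0)%VS.
Proof. by rewrite capvC capv_compl. Qed.
Lemma qpiE v : qpi v = vsproj qW (daddv_pi qW <[y]> v).
Proof. by rewrite /qpi -lock comp_lfunE lfunE. Qed.
Lemma qpiK w : qpi (vsval w) = w.
Proof. by rewrite qpiE daddv_pi_id ?qdisj ?subvsP // vsvalK. Qed.
Lemma qsum v : daddv_pi qW <[y]> v + daddv_pi <[y]> qW v = v.
Proof. by rewrite daddv_pi_add ?qdisj // addvC addv_complf memvf. Qed.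
Lemma qpi_line v : v \in <[y]>%VS -> qpi v = 0.
Proof.
move=> hv; rewrite qpiE.
have : daddv_pi qW <[y]> v = 0.
  by have := qsum v; rewrite (daddv_pi_id (capv_compl _) hv) => /(canRL (addrK v)); rewrite subrr.
by move->; rewrite linear0.
Qed.
Lemma qpi_ker v : qpi v = 0 -> v \in <[y]>%VS.
Proof.
rewrite qpiE => h.
have hp : daddv_pi qW <[y]> v = 0.
  by rewrite -(vsprojK (memv_pi _ _ _)) h.
by rewrite -(qsum v) hp add0r memv_pi.
Qed.
Lemma qdim : y != 0 -> \dim {:subvs_of qW} = (\dim {:V} - 1)%N.
Proof. by move=> hy; rewrite dimvf; change (\dim qW = (\dim {:V} - 1)%N); rewrite /qW dimv_compl dim_vline hy. Qed.
Lemma qincl (w : subvs_of qW) : (linfun (@vsval _ _ qW)) w = vsval w.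
Proof. by rewrite lfunE. Qed.
End Quot.

Definition compl (V V' : vectType K) (p : 'Hom(V,V')) := fun s : 'Hom(U,V) => (p \o s)%VF.
Fact compl_lin (V V' : vectType K) (p : 'Hom(V,V')) : linear (compl p).
Proof. by move=> a s t; rewrite /compl comp_lfunDr comp_lfunZr. Qed.
HB.instance Definition _ (V V' : vectType K) (p : 'Hom(V,V')) :=
  GRing.isSemilinear.Build K 'Hom(U,V) 'Hom(U,V') _ (compl p) (GRing.semilinear_linear (compl_lin p)).
Definition qPhi (V V' : vectType K) (p : 'Hom(V,V')) := linfun (compl p).
Lemma qPhiE (V V' : vectType K) (p : 'Hom(V,V')) s u : qPhi p s u = p (s u).
Proof. by rewrite lfunE comp_lfunE. Qed.

Definition Pthm (V : vectType K) := forall (S : {vspace 'Hom(U,V)}) (F : 'Hom(U,V) -> V),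
  (\dim {:'Hom(U,V)} + 2 <= \dim S + \dim {:V})%N ->
  {in S &, forall s t, F (s + t) = F s + F t} ->
  {in S, forall s, F s \in limg s} ->
  exists x, {in S, forall s, F s = s x}.

Lemma Fsub (V : vectType K) (S : {vspace 'Hom(U,V)}) (F : 'Hom(U,V) -> V) :
  {in S &, forall s t, F (s + t) = F s + F t} ->
  {in S &, forall s t, F (s - t) = F s - F t}.
Proof.
move=> Fadd s t hs ht; apply/eqP; rewrite eq_sym subr_eq -Fadd ?memvB //.
by rewrite subrK.
Qed.

Lemma quot_step (V : vectType K) (IH : forall V' : vectType K, (\dim {:V'} < \dim {:V})%N -> Pthm V')
  (S : {vspace 'Hom(U,V)}) (F : 'Hom(U,V) -> V)
  (hcod : (\dim {:'Hom(U,V)} + 2 <= \dim S + \dim {:V})%N)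
  (Fadd : {in S &, forall s t, F (s + t) = F s + F t})
  (Fl : {in S, forall s, F s \in limg s})
  (y : V) (r : 'Hom(U,V)) (hr : r \notin S) (hry : forall u, r u \in <[y]>%VS) :
  exists x, {in S, forall s, F s - s x \in <[y]>%VS}.
Proof.
have ynz : y != 0.
  apply: contraNneq hr => y0; suff -> : r = 0 by rewrite mem0v.
  by apply/lfunP => u; rewrite zero_lfunE; move: (hry u); rewrite y0 => /vlineP[k ->]; rewrite scaler0.
pose p := qpi y.
pose Phi := qPhi p.
pose PhiS := (Phi \o projv S)%VF.
pose lift := (projv S \o PhiS^-1)%VF.
have liftS t : lift t \in S by rewrite comp_lfunE memv_proj.
have Philift t : t \in (Phi @: S)%VS -> Phi (lift t) = t.
  case/memv_imgP => s hs ->.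
  have -> : Phi (lift (Phi s)) = PhiS (PhiS^-1%VF (Phi s)) by rewrite !comp_lfunE.
  apply: limg_lfunVK; apply/memv_imgP; exists s; first exact: memvf.
  by rewrite comp_lfunE projv_id.
pose F' t := p (F (lift t)).
have npos : (0 < \dim {:V})%N.
  by apply: leq_trans (dimvS (subvf <[y]>)); rewrite dim_vline ynz.
have rker : r \in lker Phi.
  rewrite memv_ker; apply/eqP/lfunP => u; rewrite zero_lfunE qPhiE.
  exact: qpi_line.
have [x hx] : exists x, {in (Phi @: S)%VS, forall t, F' t = t x}.
  apply: (IH (subvs_of (qW y))).
  - by rewrite qdim // subn1 ltn_predL.
  - have h1 := limg_ker_dim Phi S.
    have h2 : (\dim (S :&: lker Phi) < \dim (lker Phi))%N.
      rewrite (ltn_leqif (dimv_leqif_sup (capvSr _ _))); apply/negP => /subvP /(_ r rker).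
      by rewrite memv_cap (negPf hr).
    have h3 := limg_ker_dim Phi fullv.
    rewrite capfv in h3.
    have h4 : \dim (limg Phi) = \dim {:'Hom(U, subvs_of (qW y))}.
      apply/eqP; rewrite eqn_leq dimvS ?subvf //=; apply: dimvS; apply/subvP => t _.
      apply/memv_imgP; exists (linfun (@vsval _ _ (qW y)) \o t)%VF; first exact: memvf.
      by apply/lfunP => u; rewrite qPhiE comp_lfunE qincl qpiK.
    have eH : \dim {:'Hom(U,V)} = (\dim {:U} * \dim {:V})%N by rewrite !dimvf.
    have eH' : \dim {:'Hom(U, subvs_of (qW y))} = (\dim {:U} * (\dim {:V} - 1))%N.
      by rewrite -(qdim ynz) !dimvf.
    have hmn := leq_pmulr (\dim {:U}) npos.
    move: h1 h2 h3 h4 hcod; rewrite eH eH' (qdim ynz) mulnBr muln1.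
    move: (\dim {:U} * \dim {:V})%N hmn => A hmn.
    move: (\dim {:V} : nat) npos => n npos. move: (\dim {:U} : nat) hmn => m hmn.
    move: (\dim (S :&: lker Phi) : nat) (\dim (Phi @: S) : nat) (\dim S : nat) => a b c.
    move: (\dim (lker Phi) : nat) (\dim (limg Phi) : nat) => d e.
    lia.
  - move=> t1 t2 h1 h2; rewrite /F' linearD Fadd ?liftS //.
    exact: linearD.
  - move=> t ht; rewrite /F'; have /memv_imgP[u _ ->] := Fl _ (liftS t).
    by rewrite -qPhiE -/Phi (Philift t ht) memv_img ?memvf.
exists x => s hs; apply: qpi_ker.
have ht : Phi s \in (Phi @: S)%VS by apply: memv_img.
have hd : s - lift (Phi s) \in S by rewrite memvB ?liftS.
have Phid : Phi (s - lift (Phi s)) = 0.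
  by rewrite linearB /= (Philift _ ht) subrr.
have pFd : p (F (s - lift (Phi s))) = 0.
  have /memv_imgP[u _ ->] := Fl _ hd.
  have := qPhiE p (s - lift (Phi s)) u; rewrite -/Phi Phid zero_lfunE => e; exact: (esym e).
have e3 : p (F (lift (Phi s))) = p (s x) := etrans (hx _ ht) (qPhiE p s x).
have eF : F s = F (lift (Phi s)) + F (s - lift (Phi s)) by rewrite (Fsub Fadd) ?liftS // addrC subrK.
by rewrite linearB /= eF linearD /= pFd addr0 e3 subrr.
Qed.


Section Comb.
Variable (V : vectType K).

Lemma lsum1 (y1 y2 : V) k : y2 \notin <[y1]>%VS -> k *: (y1 + y2) \in <[y1]>%VS -> k = 0.
Proof.
move=> hy /vlineP[a e]; apply/eqP; apply/negPn/negP => kz; move/negP: hy; apply.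
apply/vlineP; exists (k^-1 * (a - k)); rewrite -scalerA scalerBl -e -scalerBr addrC addKr.
by rewrite scalerA mulVf // scale1r.
Qed.

Lemma lsum2 (y1 y2 : V) k : y2 \notin <[y1]>%VS -> y1 != 0 -> k *: (y1 + y2) \in <[y2]>%VS -> k = 0.
Proof.
move=> hy y1nz /vlineP[a e]; apply/eqP; apply/negPn/negP => kz.
have e1 : k *: y1 = (a - k) *: y2 by rewrite scalerBl -e scalerDr addrK.
have akz : a - k != 0.
  apply: contraNneq y1nz => h; move: e1; rewrite h scale0r => /eqP; rewrite scaler_eq0 (negPf kz) orFb.
  by [].
move/negP: hy; apply; apply/vlineP; exists ((a - k)^-1 * k).
by rewrite -scalerA e1 scalerA mulVf // scale1r.
Qed.

Lemma lcap (y1 y2 v : V) : y2 \notin <[y1]>%VS -> v \in <[y1]>%VS -> v \in <[y2]>%VS -> v = 0.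
Proof.
move=> hy /vlineP[a ea] /vlineP[b eb].
have [b0|bnz] := eqVneq b 0; first by rewrite eb b0 scale0r.
move/negP: hy; case; apply/vlineP; exists (b^-1 * a).
by rewrite -scalerA -ea eb scalerA mulVf // scale1r.
Qed.

End Comb.

Definition evf (V : vectType K) (d : U) := fun s : 'Hom(U,V) => s d.
Arguments evf : clear implicits.
Fact evf_lin (V : vectType K) (d : U) : linear (evf V d).
Proof. by move=> a s t; rewrite /evf add_lfunE scale_lfunE. Qed.
HB.instance Definition _ (V : vectType K) (d : U) :=
  GRing.isSemilinear.Build K 'Hom(U,V) V _ (evf V d) (GRing.semilinear_linear (@evf_lin V d)).
Definition ev (V : vectType K) (d : U) := linfun (evf V d).
Arguments ev : clear implicits.
Lemma evE (V : vectType K) (d : U) s : ev V d s = s d.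
Proof. by rewrite lfunE. Qed.

Lemma combine (V : vectType K) (S : {vspace 'Hom(U,V)}) (F : 'Hom(U,V) -> V)
  (hcod : (\dim {:'Hom(U,V)} + 2 <= \dim S + \dim {:V})%N)
  (Fl : {in S, forall s, F s \in limg s})
  (y1 y2 : V) (x1 x2 : U) (y1nz : y1 != 0) (hy : y2 \notin <[y1]>%VS)
  (h1 : {in S, forall s, F s - s x1 \in <[y1]>%VS})
  (h2 : {in S, forall s, F s - s x2 \in <[y2]>%VS}) :
  {in S, forall s, F s = s x1}.
Proof.
have [ex|dnz] := eqVneq (x1 - x2) 0.
  move=> s hs; apply/eqP; rewrite -subr_eq0; apply/eqP; apply: (lcap hy (h1 _ hs)).
  by move/eqP: ex; rewrite subr_eq0 => /eqP ->; exact: h2.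
exfalso.
pose E := vbasis (fullv : {vspace U}).
pose d := x1 - x2.
have [i ci] : exists i, coord E i d != 0.
  case: (pickP (fun i => coord E i d != 0)) => [i hi|h]; first by exists i.
  move/eqP: dnz; case; rewrite -/d (coord_vbasis (memvf d)); apply: big1 => i _.
  by move: (h i) => /negbFE/eqP ->; rewrite scale0r.
set c := coord E i d.
have rkd (v : V) : rk \1%VF E i (c^-1 *: v) d = v.
  by rewrite rkE id_lfunE -/c scalerA mulfV // scale1r.
pose P := (<[y1]> + <[y2]>)%VS.
pose M := ((ev V d) @^-1: P)%VS.
have hSM : (S <= M)%VS.
  apply/subvP => s hs; rewrite -memv_preim evE.
  have -> : s d = - (F s - s x1) + (F s - s x2) by rewrite /d linearB /=; rewrite opprB addrA subrK.
  by apply: memv_add; rewrite ?memvN ?h1 ?h2.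
have hMS : (M <= S)%VS.
  have h1' := limg_ker_dim (ev V d) M.
  have hP : (\dim (ev V d @: M) <= 2)%N.
    have sub : (ev V d @: M <= P)%VS.
      by apply/subvP => v /memv_imgP[m hm ->]; rewrite memv_preim.
    apply: leq_trans (dimvS sub) _; apply: leq_trans (dimv_add_leqif _ _).1 _.
    by rewrite !dim_vline; case: (y1 != 0); case: (y2 != 0).
  have hK : (\dim (M :&: lker (ev V d)) <= \dim (lker (ev V d)))%N by apply: dimvS; apply: capvSr.
  have hL := limg_ker_dim (ev V d) fullv; rewrite capfv in hL.
  have himg : (\dim {:V} <= \dim (limg (ev V d)))%N.
    apply: dimvS; apply/subvP => v _; apply/memv_imgP.
    by exists (rk \1%VF E i (c^-1 *: v)); rewrite ?memvf // evE rkd.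
  have eH : \dim {:'Hom(U,V)} = (\dim {:U} * \dim {:V})%N by rewrite !dimvf.
  have hd : (\dim M <= \dim S)%N.
    move: h1' hP hK hL himg hcod; rewrite eH.
    move: (\dim {:U} * \dim {:V})%N (\dim {:V} : nat) => A n.
    move: (\dim (M :&: lker (ev V d)) : nat) (\dim (ev V d @: M) : nat) (\dim M : nat) => a b m.
    move: (\dim (lker (ev V d)) : nat) (\dim (limg (ev V d)) : nat) (\dim S : nat) => k l sS.
    lia.
  have /eqP -> : S == M by rewrite eqEdim hSM hd.
  exact: subvv.
have hline (v : V) u : rk \1%VF E i (c^-1 *: v) u \in <[v]>%VS.
  by rewrite rkE scalerA memvZ ?memv_line.
pose st := rk \1%VF E i (c^-1 *: (y1 + y2)).
have hs : st \in S.
  apply: (subvP hMS); rewrite -memv_preim evE rkd.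
  by apply: memv_add; apply: memv_line.
have hF : F st \in <[y1 + y2]>%VS.
  by have /memv_imgP[u _ ->] := Fl _ hs; apply: hline.
have g1 : F st - st x1 = 0.
  have /vlineP[k ek] : F st - st x1 \in <[y1 + y2]>%VS by rewrite memvB ?hline.
  by move: (h1 _ hs); rewrite ek => /(lsum1 hy) ->; rewrite scale0r.
have g2 : F st - st x2 = 0.
  have /vlineP[k ek] : F st - st x2 \in <[y1 + y2]>%VS by rewrite memvB ?hline.
  by move: (h2 _ hs); rewrite ek => /(lsum2 hy y1nz) ->; rewrite scale0r.
have : st d = y1 + y2 by apply: rkd.
have -> : st d = (F st - st x2) - (F st - st x1).
  by rewrite /d linearB /= opprB [RHS]addrC addrA subrK.
rewrite g1 g2 subrr => /esym/eqP; rewrite addr_eq0 => /eqP e.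
by move/negP: hy; apply; rewrite -[y2]opprK -e memvN memv_line.
Qed.


Lemma main_ind n : forall V : vectType K, \dim {:V} = n -> Pthm V.
Proof.
elim/ltn_ind: n => n IHn V hn S F hcod Fadd Fl.
have IH : forall V' : vectType K, (\dim {:V'} < \dim {:V})%N -> Pthm V'.
  by move=> V' h; apply: (IHn _ _ V' erefl); rewrite -hn.
have hSf : (\dim S <= \dim {:'Hom(U,V)})%N by apply: dimvS; apply: subvf.
have n2 : (1 < \dim {:V})%N by move: hcod hSf; lia.
have [eS|nS] := eqVneq S fullv.
  rewrite eS in Fadd Fl.
  have [x hx] := base_full n2 (fun s t => Fadd s t (memvf s) (memvf t)) (fun s => Fl s (memvf s)).
  by exists x => s _; apply: hx.
have [s0 _ hs0] : exists2 s0, s0 \in (fullv : {vspace 'Hom(U,V)}) & s0 \notin S.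
  apply/subvPn/negP => h; move/eqP: nS; apply; apply/vspaceP => v.
  by rewrite memvf (subvP h _ (memvf v)).
pose X := vbasis (fullv : {vspace V}).
have es0 : s0 = \sum_j rk s0 X j X`_j.
  apply/lfunP => u; rewrite sum_lfunE.
  under eq_bigr => j _ do rewrite rkE.
  exact: (coord_vbasis (memvf (s0 u))).
have [j hj] : exists j, rk s0 X j X`_j \notin S.
  case: (pickP (fun j => rk s0 X j X`_j \notin S)) => [j hj|h]; first by exists j.
  move/negP: hs0; case; rewrite es0; apply: memv_suml => j _.
  by move: (h j) => /negbFE.
pose y1 := X`_j.
have hry1 u : rk s0 X j y1 u \in <[y1]>%VS by rewrite rkE memvZ ?memv_line.
have y1nz : y1 != 0.
  apply: contraNneq hj => y0; suff -> : rk s0 X j X`_j = 0 by rewrite mem0v.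
  by apply/lfunP => u; rewrite rkE zero_lfunE -/y1 y0 scaler0.
have [z hz] : exists z, z \notin <[y1]>%VS.
  by apply: exists_notin; rewrite dim_vline y1nz.
have [y2 [r2 [hy2 hr2 hry2]]] : exists y2 r2, [/\ y2 \notin <[y1]>%VS, r2 \notin S &
    forall u, r2 u \in <[y2]>%VS].
  case: (boolP (rk s0 X j z \in S)) => hq; last first.
    by exists z, (rk s0 X j z); split => // u; rewrite rkE memvZ ?memv_line.
  exists (y1 + z), (rk s0 X j (y1 + z)); split.
  - apply: contra hz => h; rewrite -(addKr y1 z) memvD ?memvN ?memv_line //.
  - rewrite rkD; apply: contra hj => h; rewrite -/y1 -(addrK (rk s0 X j z) (rk s0 X j y1)).
    by rewrite memvB.
  - by move=> u; rewrite rkE memvZ ?memv_line.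
have [x1 h1] := quot_step IH hcod Fadd Fl hj hry1.
have [x2 h2] := quot_step IH hcod Fadd Fl hr2 hry2.
by exists x1; apply: (combine hcod Fl y1nz hy2 h1 h2).
Qed.

End Main.


Theorem theorem1p5 (K : fieldType) (U V : vectType K)
  (S : {vspace 'Hom(U, V)})
  (hcodim : (codimv S + 2 <= \dim (fullv : {vspace V}))%N)
  (F : subvs_of S -> V)
  (F_add : forall s t : subvs_of S, F (s + t) = F s + F t)
  (F_rc : forall s : subvs_of S, F s \in limg (vsval s)) :
  exists x : U, forall s : subvs_of S, F s = (vsval s) x.
Proof.
pose G := fun s : 'Hom(U,V) => F (vsproj S s).
have hSf : (\dim S <= \dim {:'Hom(U,V)})%N by apply: dimvS; apply: subvf.
have hcod : (\dim {:'Hom(U,V)} + 2 <= \dim S + \dim {:V})%N.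
  by move: hcodim hSf; rewrite /codimv; lia.
have Gadd : {in S &, forall s t, G (s + t) = G s + G t}.
  by move=> s t _ _; rewrite /G linearD F_add.
have Gl : {in S, forall s, G s \in limg s}.
  by move=> s hs; have := F_rc (vsproj S s); rewrite vsprojK.
have [x hx] := main_ind erefl hcod Gadd Gl.
by exists x => s; have := hx _ (subvsP s); rewrite /G vsvalK.
Qed.
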